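(* Let $\mathcal L$ be a finite distributive lattice, $\mathcal I$ a poset ideal and $\mathcal J$ a poset coideal of $\mathcal L$ with $\mathcal I\cup\mathcal J=\mathcal L$ and $\mathcal I\cap\mathcal J=\emptyset$. Then the ideal $H_{\mathcal I}\cap H_{\mathcal J}$ is generated by the monomials $\mathrm{lcm}(u_p,u_q)$ with $p\in\mathcal J$, $q\in\mathcal I$ and $q$ a lower neighbor of $p$. In particular, all minimal generators of $H_{\mathcal I}\cap H_{\mathcal J}$ have degree $\operatorname{rank}\mathcal L+1$.
   Context: Let $P$ be the set of join-irreducible elements of $\mathcal L$ (elements with exactly one lower neighbor); for $p\in\mathcal L$ put $\ell(p)=\{q\in P:q\le p\}$. Let $K$ be a field, $S=K[x_p,y_p:p\in P]$ (all variables of degree 1), $u_q=\prod_{p\in\ell(q)}x_p\prod_{p\in P\setminus\ell(q)}y_p$ for $q\in\mathcal L$, and for $\mathcal S\subseteq\mathcal L$ let $H_{\mathcal S}=(u_q:q\in\mathcal S)$. Poset ideals are closed downward, poset coideals upward. $\operatorname{rank}\mathcal L$ is the common length of the maximal chains of $\mathcal L$. *)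

(* Defs.v *)
From HB Require Import structures.
From mathcomp Require Import all_boot all_order all_algebra.
From mathcomp Require Import mpoly.
Set Implicit Arguments. Unset Strict Implicit. Unset Printing Implicit Defensive.
Import Order.TTheory GRing.Theory.
Local Open Scope order_scope.

Section LatticeDefs.
Context {d : Order.disp_t} {L : finDistrLatticeType d}.

Definition lower_nb (q p : L) : bool :=
  (q < p) && [forall r : L, ~~ ((q < r) && (r < p))].

Definition join_irr (p : L) : bool := #|[set q : L | lower_nb q p]| == 1%N.

Definition poset_ideal (I : {set L}) : Prop :=
  forall p q : L, q <= p -> p \in I -> q \in I.
Definition poset_coideal (J : {set L}) : Prop :=
  forall p q : L, p <= q -> p \in J -> q \in J.

Definition is_chain (C : {set L}) : bool :=
  [forall a in C, forall b in C, (a <= b) || (b <= a)].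

(* rank of L: length (#elements - 1) of a longest chain; in a finite
   distributive lattice all maximal chains have this common length *)
Definition lat_rank : nat := (\max_(C : {set L} | is_chain C) #|C|).-1.
End LatticeDefs.

Definition jirr {d : Order.disp_t} (L : finDistrLatticeType d) : Type :=
  {p : L | join_irr p}.

(* number of variables of S = K[x_p, y_p : p in P]: variables are
   indexed by (jirr L + jirr L): inl p is x_p, inr p is y_p *)
Definition nvars {d : Order.disp_t} (L : finDistrLatticeType d) : nat :=
  #|{: (jirr L + jirr L)%type}|.

Section PolyDefs.
Context {d : Order.disp_t} {L : finDistrLatticeType d} (K : fieldType).
Local Notation S := {mpoly K[nvars L]}.

Definition xv (p : jirr L) : S := 'X_(enum_rank (inl p : (jirr L + jirr L)%type)).
Definition yv (p : jirr L) : S := 'X_(enum_rank (inr p : (jirr L + jirr L)%type)).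

Definition u_gen (q : L) : S :=
  ((\prod_(p : jirr L | (val p <= q)%O) xv p) *
   (\prod_(p : jirr L | ~~ (val p <= q)%O) yv p))%R.

Definition mlcm n (m1 m2 : 'X_{1..n}) : 'X_{1..n} :=
  [multinom maxn (m1 i) (m2 i) | i < n].
Definition mon_lcm (f g : S) : S := 'X_[mlcm (mlead f) (mlead g)].

Definition in_gen_ideal (I : finType) (P : pred I) (g : I -> S) (f : S) : Prop :=
  exists c : I -> S, f = (\sum_(i | P i) c i * g i)%R.

Definition in_H (T : {set L}) (f : S) : Prop := in_gen_ideal (mem T) u_gen f.

Definition mdiv n (m1 m2 : 'X_{1..n}) : bool := [forall i, m1 i <= m2 i]%N.
End PolyDefs.

(* Main.v *)
Require Import Defs.
From HB Require Import structures.
From mathcomp Require Import all_boot all_order all_algebra.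
From mathcomp Require Import mpoly.
Import Order.TTheory GRing.Theory.
Local Open Scope order_scope.
Set Implicit Arguments. Unset Strict Implicit. Unset Printing Implicit Defensive.

Section Lat.
Context {d : Order.disp_t} {L : finDistrLatticeType d}.
Implicit Types (x y z p q r a b : L).

Definition blw x := #|[set v : L | v < x]|.

Lemma blw_lt x y : x < y -> (blw x < blw y)%N.
Proof.
move=> xy; apply: proper_card; apply/properP; split.
  by apply/subsetP => v; rewrite !inE => vx; apply: lt_trans vx xy.
by exists x; rewrite !inE ?ltxx.
Qed.

Lemma exists_cover z r : z < r -> exists2 w, lower_nb w r & z <= w.
Proof.
move=> zr.
have Pz : (fun w : L => (z <= w) && (w < r)) z by rewrite /= lexx zr.
case: (@arg_maxnP L z (fun w => (z <= w) && (w < r)) blw Pz) => w /andP[zw wr] Hmax.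
exists w => //; rewrite /lower_nb wr; apply/forallP => v; apply/negP => /andP[wv vr].
have := Hmax v; rewrite (le_trans zw (ltW wv)) vr => /(_ isT).
by move=> /= H; have := leq_ltn_trans H (blw_lt wv); rewrite ltnn.
Qed.

Lemma jirr_prime r a b : join_irr r -> r <= a `|` b -> (r <= a) || (r <= b).
Proof.
rewrite /join_irr => /cards1P[r' Hr'] rab.
apply/negPn/negP; rewrite negb_or => /andP[ra rb].
have E : r = (r `&` a) `|` (r `&` b) by rewrite -meetUr; apply/esym/meet_idPl.
have lt1 : r `&` a < r by rewrite lt_neqAle leIl andbT; apply: contra ra => /eqP <-; rewrite leIr.
have lt2 : r `&` b < r by rewrite lt_neqAle leIl andbT; apply: contra rb => /eqP <-; rewrite leIr.
have [w1 w1r aw1] := exists_cover lt1.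
have [w2 w2r aw2] := exists_cover lt2.
have : w1 \in [set q | lower_nb q r] by rewrite inE.
have : w2 \in [set q | lower_nb q r] by rewrite inE.
rewrite Hr' !inE => /eqP e2 /eqP e1; subst w1 w2.
move: w1r => /andP[r'r _].
have : r <= r' by rewrite {1}E leUx aw1 aw2.
by move=> H; have := lt_le_trans r'r H; rewrite ltxx.
Qed.

Lemma ex_new x y : ~~ (x <= y) -> exists r : L, [&& join_irr r, r <= x & ~~ (r <= y)].
Proof.
move=> xy.
have Px : (fun z : L => (z <= x) && ~~ (z <= y)) x by rewrite /= lexx.
case: (@arg_minnP L x (fun z => (z <= x) && ~~ (z <= y)) blw Px) => r /andP[rx ry] Hmin.
exists r; rewrite rx ry andbT.
have bl : forall b, b < r -> b <= y.
  move=> b br; apply/negPn/negP => by'.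
  have := Hmin b; rewrite (le_trans (ltW br) rx) by' => /(_ isT).
  by move=> H; have := leq_ltn_trans H (blw_lt br); rewrite ltnn.
have r0 : r `&` y < r by rewrite lt_neqAle leIl andbT; apply: contra ry => /eqP <-; rewrite leIr.
have [a ar _] := exists_cover r0.
rewrite andbT /join_irr; apply/cards1P; exists a; apply/setP => b; rewrite !inE.
apply/idP/eqP => [br|->//]; apply/eqP/negPn/negP => ba.
move: (ar) (br) => /andP[ar' /forallP ar''] /andP[br' /forallP br''].
have ub : a `|` b <= r by rewrite leUx (ltW ar') (ltW br').
have ay : a `|` b <= y by rewrite leUx bl // bl.
have aab : a < a `|` b.
  rewrite lt_neqAle leUl andbT; apply/negP => /eqP e.
  have bla : b <= a by rewrite e leUr.
  have := br'' a; rewrite ar' andbT lt_neqAle bla andbT.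
  by rewrite ba.
have : ~~ (a `|` b < r) by have := ar'' (a `|` b); rewrite aab.
rewrite lt_neqAle ub andbT negbK => /eqP e.
by move: ry; rewrite -e ay.
Qed.

Definition ell x : {set jirr L} := [set r : jirr L | val r <= x].

Lemma ell_sub x y : x <= y -> ell x \subset ell y.
Proof. by move=> xy; apply/subsetP => r; rewrite !inE => rx; apply: le_trans xy. Qed.

Lemma ell_proper x y : x <= y -> ~~ (y <= x) -> ell x \proper ell y.
Proof.
move=> xy yx; apply/properP; split; first exact: ell_sub.
have [r /and3P[jr ry rx]] := ex_new yx.
by exists (exist _ r jr); rewrite !inE.
Qed.

Lemma ell_cover x y : lower_nb y x -> #|ell x| = (#|ell y|).+1.
Proof.
move=> yx; have /andP[yx' yx''] := yx; have {}yx'' := forallP yx''.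
have xy : ~~ (x <= y) by rewrite (lt_geF yx').
have [r0 /and3P[jr0 r0x r0y]] := ex_new xy.
pose R0 : jirr L := exist _ r0 jr0.
have key : forall s : jirr L, val s <= x -> ~~ (val s <= y) -> val s `|` y = x.
  move=> s sx sy.
  have h1 : val s `|` y <= x by rewrite leUx sx (ltW yx').
  have h2 : y < val s `|` y.
    rewrite lt_neqAle leUr andbT; apply/negP => /eqP e.
    by move: sy; rewrite {1}e leUl.
  have := yx'' (val s `|` y); rewrite h2 /= lt_neqAle h1 andbT negbK.
  by move/eqP.
have E : ell x = R0 |: ell y.
  apply/setP => r; rewrite !inE.
  case ry: (val r <= y); first by rewrite (le_trans ry (ltW yx')) orbT.
  rewrite orbF; apply/idP/eqP => [rx | ->]; last by [].
  apply: val_inj => /=; apply: le_anti.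
  have e1 := key r rx (negbT ry).
  have e2 := key R0 r0x r0y.
  have k1 : val r <= r0 `|` y by rewrite e2.
  have k2 : r0 <= val r `|` y by rewrite e1.
  have /orP[h|h] := jirr_prime (valP r) k1; last by rewrite h in ry.
  have /orP[h'|h'] := jirr_prime jr0 k2; last by rewrite h' in r0y.
  by rewrite h h'.
by rewrite E cardsU1 inE r0y.
Qed.

Lemma ell_empty x : (forall z, ~~ (z < x)) -> ell x = set0.
Proof.
move=> none; apply/setP => r; rewrite !inE; apply/negP => rx.
have /cards1P[q Hq] := valP r.
have : q \in [set q | lower_nb q (val r)] by rewrite Hq inE.
rewrite inE => /andP[qr _].
by have := none q; rewrite (lt_le_trans qr rx).
Qed.

Lemma is_chainP (C : {set L}) :
  reflect (forall a b, a \in C -> b \in C -> (a <= b) || (b <= a)) (is_chain C).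
Proof.
apply: (iffP forall_inP) => H.
  by move=> a b aC bC; exact: (forall_inP (H a aC) b bC).
by move=> a aC; apply/forall_inP => b bC; apply: H.
Qed.

Lemma chain_ex x : exists C : {set L},
  [/\ is_chain C, {in C, forall c, c <= x} & #|C| = (#|ell x|).+1].
Proof.
have [n] := ubnP (blw x); elim: n x => // n IH x hx.
case: (pickP (fun z => z < x)) => [z zx | none]; last first.
  exists [set x]; split.
  - by apply/is_chainP => a b; rewrite !inE => /eqP -> /eqP ->; rewrite lexx.
  - by move=> c; rewrite inE => /eqP ->.
  - by rewrite cards1 ell_empty ?cards0 // => z; rewrite none.
have [y yx _] := exists_cover zx.
have /andP[yx' _] := yx.
have [C [Cc Cy Ccard]] := IH y (leq_trans (blw_lt yx') (ltnSE hx)).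
exists (x |: C); split.
- apply/is_chainP => a b; rewrite !in_setU1.
  have Cx : forall c, c \in C -> c <= x by move=> c /Cy cy; apply: le_trans cy (ltW yx').
  case/orP => [/eqP -> | aC]; case/orP => [/eqP -> | bC].
  + by rewrite lexx.
  + by rewrite Cx // orbT.
  + by rewrite Cx.
  + exact: (is_chainP _ Cc).
- move=> c; rewrite in_setU1 => /orP[/eqP -> | /Cy cy]; first exact: lexx.
  exact: le_trans cy (ltW yx').
- rewrite cardsU1 Ccard (ell_cover yx).
  suff -> : x \notin C by [].
  by apply/negP => /Cy; rewrite (lt_geF yx').
Qed.

Lemma ell_inj_le a b : a <= b -> #|ell a| = #|ell b| -> a = b.
Proof.
move=> ab e; case ba: (b <= a); first by apply: le_anti; rewrite ab ba.
have := proper_card (ell_proper ab (negbT ba)).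
by rewrite e ltnn.
Qed.

Lemma chain_card_le (C : {set L}) : is_chain C -> (#|C| <= #|{: jirr L}|.+1)%N.
Proof.
move=> /is_chainP Cc.
pose f (c : L) : 'I_(#|{: jirr L}|.+1) := inord #|ell c|.
have fE : forall c, (f c : nat) = #|ell c| by move=> c; rewrite inordK // ltnS max_card.
rewrite -(@card_in_imset _ _ f).
  by apply: leq_trans (max_card _) _; rewrite card_ord.
move=> a b aC bC /(congr1 val); rewrite /= !fE => e.
have /orP[ab|ba] := Cc a b aC bC; first exact: ell_inj_le.
by apply/esym/ell_inj_le.
Qed.

Lemma ex_top (x0 : L) : exists x, ell x = setT.
Proof.
case: (@arg_maxnP L x0 predT (fun x => #|ell x|) isT) => x _ Hmax.
exists x; apply/setP => r; rewrite !inE; apply/negPn/negP => rx.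
have pr : ell x \proper ell (x `|` val r).
  apply: ell_proper; first exact: leUl.
  by apply/negP => h; move: rx; rewrite (le_trans _ h) // leUr.
have := Hmax (x `|` val r) isT; rewrite /= leqNgt.
by rewrite (proper_card pr).
Qed.

Lemma rank_eq (x0 : L) : lat_rank (L:=L) = #|{: jirr L}|.
Proof.
rewrite /lat_rank.
have [x ex] := ex_top x0.
have [C [Cc _ Ccard]] := chain_ex x.
suff -> : (\max_(C : {set L} | is_chain C) #|C|)%N = #|{: jirr L}|.+1 by [].
apply/eqP; rewrite eqn_leq; apply/andP; split.
  by apply/bigmax_leqP => C' hC'; exact: chain_card_le.
have := @leq_bigmax_cond _ (fun C : {set L} => is_chain C) (fun C => #|C|) C Cc.
by rewrite Ccard ex cardsT.
Qed.

End Lat.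

Section Ideal.
Variables (n : nat) (K : fieldType) (I : finType) (P : pred I) (g : I -> 'X_{1..n}).

Lemma lem_addr (a b : 'X_{1..n}) : (a <= a + b)%MM.
Proof. by apply/mnm_lepP => i; rewrite mnmDE leq_addr. Qed.

Lemma idealA (c : I -> {mpoly K[n]}) m :
  m \in msupp (\sum_(i | P i) (c i * 'X_[g i]))%R -> exists2 i, P i & (g i <= m)%MM.
Proof.
rewrite mcoeff_msupp raddf_sum /= => nz.
case: (pickP (fun i => P i && (g i <= m)%MM)) => [i /andP[]|none]; first by exists i.
exfalso; move/eqP: nz; apply; apply: big1 => i Pi.
have := none i; rewrite Pi /= => ngm.
apply/eqP; rewrite mcoeff_eq0; apply/negP.
rewrite (perm_mem (msuppMX _ _)) => /mapP[m' _ e].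
by move: ngm; rewrite e lem_addr.
Qed.

Lemma idealB (f : {mpoly K[n]}) :
  (forall m, m \in msupp f -> exists2 i, P i & (g i <= m)%MM) ->
  exists c : I -> {mpoly K[n]}, f = (\sum_(i | P i) c i * 'X_[g i])%R.
Proof.
move=> H.
pose pk m := [pick i | P i && (g i <= m)%MM].
have pkP : forall m, m \in msupp f -> exists i, [/\ pk m = Some i, P i & (g i <= m)%MM].
  move=> m /H [i Pi gi]; rewrite /pk; case: pickP => [j /andP[]|none]; first by exists j.
  by have := none i; rewrite Pi gi.
exists (fun i => \sum_(m <- msupp f) (if pk m == Some i then f@_m *: 'X_[(m - g i)%MM] else 0))%R.
rewrite {1}(mpolyE f).
under [RHS]eq_bigr do rewrite big_distrl /=.
rewrite exchange_big /=.
apply: eq_big_seq => m mf.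
have [i [pki Pi gim]] := pkP m mf.
rewrite (bigD1 i) //= pki eqxx big1 ?addr0.
  by rewrite -scalerAl -mpolyXD submK.
move=> j /andP[_ ji]; case: eqP => [[e]|]; last by rewrite mul0r.
by rewrite e eqxx in ji.
Qed.

End Ideal.

Section Main.
Context {d : Order.disp_t} {L : finDistrLatticeType d} (K : fieldType).
Local Notation V := (jirr L + jirr L)%type.
Local Notation S := {mpoly K[nvars L]}.

Definition ex (x : L) : 'X_{1..nvars L} :=
  (\big[+%MM/0%MM]_(p : jirr L | (val p <= x)%O) U_(enum_rank (inl p : V)) +
   \big[+%MM/0%MM]_(p : jirr L | ~~ (val p <= x)%O) U_(enum_rank (inr p : V)))%MM.

Lemma u_genE x : u_gen K x = 'X_[ex x].
Proof.
rewrite /u_gen /xv /yv /ex mpolyXD.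
by rewrite -!(big_morph (fun m => 'X_[m] : S) (@mpolyXD _ K) (mpolyX0 _ _)).
Qed.

Lemma sum_pick (T : finType) (B : pred T) p0 :
  (\sum_(p | B p) ((p == p0) : nat))%N = B p0.
Proof.
rewrite big_mkcond (bigD1 p0) //= eqxx big1 ?addn0; first by case: (B p0).
by move=> p /negbTE ->; case: (B p).
Qed.

Lemma ex_coord x (v : V) : ex x (enum_rank v) =
  match v with inl p => ((val p <= x)%O : nat) | inr p => (~~ (val p <= x)%O : nat) end.
Proof.
rewrite /ex mnmDE !mnm_sumE.
under eq_bigr do rewrite mnm1E (inj_eq enum_rank_inj).
under [X in (_ + X)%N]eq_bigr do rewrite mnm1E (inj_eq enum_rank_inj).
case: v => p0 /=.
  by rewrite sum_pick big1 ?addn0.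
by rewrite sum_pick big1.
Qed.

Lemma ex_le x m : (ex x <= m)%MM <->
  (forall p : jirr L, (val p <= x)%O -> (0 < m (enum_rank (inl p : V)))%N) /\
  (forall p : jirr L, ~~ (val p <= x)%O -> (0 < m (enum_rank (inr p : V)))%N).
Proof.
split.
  move/mnm_lepP => H; split => p hp; [have := H (enum_rank (inl p : V)) | have := H (enum_rank (inr p : V))]; by rewrite ex_coord hp.
case=> H1 H2; apply/mnm_lepP => i; rewrite -(enum_valK i) ex_coord.
case: (enum_val i) => p; case: (boolP (val p <= x)%O) => hp /=;
  by [exact: H1 | exact: H2 | ].
Qed.

Lemma mlcm_le n (a b m : 'X_{1..n}) : (mlcm a b <= m)%MM = (a <= m)%MM && (b <= m)%MM.
Proof.
apply/mnm_lepP/andP => [H|[/mnm_lepP H1 /mnm_lepP H2]].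
  by split; apply/mnm_lepP => i; have := H i; rewrite mnmE geq_max => /andP[].
by move=> i; rewrite mnmE geq_max H1 H2.
Qed.

Lemma comb (I J : {set L}) m p q :
  poset_ideal I -> poset_coideal J -> I :|: J = setT -> I :&: J = set0 ->
  p \in J -> q \in I -> (ex p <= m)%MM -> (ex q <= m)%MM ->
  exists p', exists q', [/\ p' \in J, q' \in I, lower_nb q' p', (ex p' <= m)%MM & (ex q' <= m)%MM].
Proof.
move=> hI hJ hU hIJ pJ qI /ex_le [hp1 hp2] /ex_le [hq1 hq2].
pose a := p `&` q.
have aI : a \in I by apply: (hI q a (leIr _ _) qI).
have aJ : a \notin J.
  apply/negP => aJ; have : a \in I :&: J by rewrite inE aI aJ.
  by rewrite hIJ inE.
have key : forall z, a <= z -> z <= p -> (ex z <= m)%MM.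
  move=> z az zp; apply/ex_le; split => r hr.
    by apply: hp1; apply: le_trans hr zp.
  have : ~~ (val r <= a) by apply: contra hr => h; apply: le_trans h az.
  rewrite lexI negb_and => /orP[h|h]; [exact: hp2 | exact: hq2].
have Pp : (fun z => [&& z \in J, a <= z & z <= p]) p by rewrite /= pJ leIl lexx.
case: (@arg_minnP L p (fun z => [&& z \in J, a <= z & z <= p]) blw Pp) => p' /and3P[p'J ap' p'p] Hmin.
have ap'lt : a < p'.
  rewrite lt_neqAle ap' andbT; apply/negP => /eqP e.
  by move: aJ; rewrite e p'J.
have [q' q'p' aq'] := exists_cover ap'lt.
have q'lt : q' < p' by case/andP: q'p'.
have q'J : q' \notin J.
  apply/negP => q'J; have := Hmin q'; rewrite q'J aq' (le_trans (ltW q'lt) p'p) => /(_ isT) H.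
  by have := leq_ltn_trans H (blw_lt q'lt); rewrite ltnn.
have q'I : q' \in I.
  have : q' \in I :|: J by rewrite hU inE.
  by rewrite inE (negbTE q'J) orbF.
exists p', q'; split => //; apply: key => //.
exact: le_trans (ltW q'lt) p'p.
Qed.

Lemma gen_iff (I : finType) (P : pred I) (G : I -> S) (g : I -> 'X_{1..nvars L}) f :
  (forall i, G i = 'X_[g i]) ->
  (in_gen_ideal P G f <-> forall m, m \in msupp f -> exists2 i, P i & (g i <= m)%MM).
Proof.
move=> hG; split.
  case=> c -> m; rewrite (eq_bigr (fun i => (c i * 'X_[g i])%R)); last by move=> i _; rewrite hG.
  exact: idealA.
move/(idealB (K := K)) => [c hc]; exists c; rewrite hc.
by apply: eq_bigr => i _; rewrite hG.
Qed.

Lemma in_H_iff (T : {set L}) (f : S) :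
  in_H T f <-> (forall m, m \in msupp f -> exists2 q, q \in T & (ex q <= m)%MM).
Proof. exact: gen_iff u_genE. Qed.

Lemma sumb_card (T : finType) (B : pred T) :
  (\sum_(r : T) (B r : nat))%N = #|[set r | B r]|.
Proof.
rewrite -sum1_card [RHS]big_mkcond /=; apply: eq_bigr => r _.
by rewrite inE; case: (B r).
Qed.

Lemma mdeg_cover p q : lower_nb q p ->
  mdeg (mlcm (ex p) (ex q)) = (#|{: jirr L}|).+1.
Proof.
move=> qp; have /andP[qlt _] := qp.
rewrite mdegE (reindex (@enum_rank V) (onW_bij _ (@enum_rank_bij V))) /=.
rewrite big_sumType /=.
under eq_bigr do rewrite mnmE !ex_coord.
under [X in (_ + X)%N]eq_bigr do rewrite mnmE !ex_coord.
rewrite (eq_bigr (fun r : jirr L => ((val r <= p)%O : nat))); last first.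
  move=> r _; case: (boolP (val r <= q)%O) => h; last by rewrite maxn0.
  by rewrite (le_trans h (ltW qlt)).
rewrite [X in (_ + X)%N](eq_bigr (fun r : jirr L => (~~ (val r <= q)%O : nat))); last first.
  move=> r _; case: (boolP (val r <= q)%O) => h /=; last by case: (~~ _).
  by rewrite (le_trans h (ltW qlt)).
rewrite !sumb_card.
have -> : #|[set r : jirr L | (val r <= p)%O]| = #|ell p| by [].
rewrite (ell_cover qp) -(cardsC (ell q)).
have -> : #|[set r : jirr L | ~~ (val r <= q)%O]| = #|~: ell q|.
  by apply: eq_card => r; rewrite !inE.
by rewrite addSn.
Qed.
End Main.

Unset Implicit Arguments.
Set Strict Implicit.

Theorem lemma3p11 (K : fieldType) (d : Order.disp_t) (L : finDistrLatticeType d)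
    (I J : {set L}) :
  poset_ideal I -> poset_coideal J ->
  I :|: J = [set: L] -> I :&: J = set0 ->
  (forall f : {mpoly K[nvars L]},
     (in_H I f /\ in_H J f) <->
     in_gen_ideal
       [pred pq : L * L | [&& pq.1 \in J, pq.2 \in I & lower_nb pq.2 pq.1]]
       (fun pq => mon_lcm (u_gen K pq.1) (u_gen K pq.2)) f) /\
  (forall m : 'X_{1..nvars L},
     (in_H I ('X_[m] : {mpoly K[nvars L]}) /\ in_H J ('X_[m] : {mpoly K[nvars L]})) ->
     (forall m' : 'X_{1..nvars L},
        (in_H I ('X_[m'] : {mpoly K[nvars L]}) /\ in_H J ('X_[m'] : {mpoly K[nvars L]})) ->
        mdiv m' m -> m' = m) ->
     mdeg m = (lat_rank (L:=L)).+1).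
Proof.
move=> hI hJ hU hIJ.
have lcmE : forall pq : L * L, mon_lcm (u_gen K pq.1) (u_gen K pq.2) =
    'X_[mlcm (ex pq.1) (ex pq.2)] :> {mpoly K[nvars L]}.
  by move=> pq; rewrite /mon_lcm !(u_genE K) !mleadXm.
split.
  move=> f; rewrite !in_H_iff (gen_iff _ _ lcmE); split.
    case=> HI HJ m hm.
    have [q qI hq] := HI m hm; have [p pJ hp] := HJ m hm.
    have [p' [q' [p'J q'I cov hp' hq']]] := comb hI hJ hU hIJ pJ qI hp hq.
    by exists (p', q'); rewrite /= ?p'J ?q'I ?cov // mlcm_le hp' hq'.
  move=> H; split => m hm; have [[p q] /= /and3P[pJ qI _]] := H m hm;
    rewrite mlcm_le => /andP[h1 h2]; [by exists q | by exists p].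
move=> m [/in_H_iff HI /in_H_iff HJ] Hmin.
have hm : m \in msupp ('X_[m] : {mpoly K[nvars L]}) by rewrite msuppX mem_seq1.
have [q qI hq] := HI m hm; have [p pJ hp] := HJ m hm.
have [p' [q' [p'J q'I cov hp' hq']]] := comb hI hJ hU hIJ pJ qI hp hq.
pose m' := mlcm (ex p') (ex q').
have := lepm_refl m'; rewrite {2}/m' mlcm_le => /andP[h1 h2].
have HI' : in_H I ('X_[m'] : {mpoly K[nvars L]}).
  by apply/in_H_iff => m0; rewrite msuppX mem_seq1 => /eqP ->; exists q'.
have HJ' : in_H J ('X_[m'] : {mpoly K[nvars L]}).
  by apply/in_H_iff => m0; rewrite msuppX mem_seq1 => /eqP ->; exists p'.
have dv : mdiv m' m.
  have : (m' <= m)%MM by rewrite mlcm_le hp' hq'.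
  by move/mnm_lepP => H; apply/forallP.
rewrite -(Hmin m' (conj HI' HJ') dv) mdeg_cover // (rank_eq p). 
 by [].
Qed.
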